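(* Let $q$ be a power of an odd prime, $c\in\mathbb{F}_q^*$, and $f(X)=c(X^{q+1}-X^2)$ on $\mathbb{F}_{q^2}$. If $\alpha\in\mathbb{F}_{q^2}\setminus\mathbb{F}_q$, then the number of $\gamma\in\mathbb{F}_{q^2}$ with $f(\gamma)=\alpha$ is either $0$ or $2$. *)

(* Defs.v *)
From mathcomp Require Import all_boot all_algebra.
Set Implicit Arguments. Unset Strict Implicit. Unset Printing Implicit Defensive.
Import GRing.Theory.
Local Open Scope ring_scope.

(* F_q inside a finite field F of order q^2: the fixed points of x |-> x^q. *)
Definition in_Fq (F : finFieldType) (q : nat) (x : F) : bool := x ^+ q == x.

Definition fq (F : finFieldType) (q : nat) (c x : F) : F :=
  c * (x ^+ q.+1 - x ^+ 2).

(* Main.v *)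
Require Import Defs.
From mathcomp Require Import all_boot all_algebra all_field.
From mathcomp Require Import ring.
Local Open Scope ring_scope.
Import GRing.Theory.

Theorem lemma5 (F : finFieldType) (p k q : nat)
  (hp : prime p) (hodd : odd p) (hk : (0 < k)%N) (hq : q = (p ^ k)%N)
  (hF : #|F| = (q ^ 2)%N)
  (c alpha : F) (hc : c != 0) (hcq : in_Fq q c) (ha : ~~ in_Fq q alpha) :
  let N := #|[set g : F | fq q c g == alpha]| in
  (N == 0)%N || (N == 2)%N.
Proof.
have pF : p \in [pchar F].
  by apply: (card_finPcharP (n := (k * 2)%N)) => //; rewrite hF hq expnM.
have qn : [pchar F].-nat q.
  by rewrite hq pnatX; apply/orP; left; rewrite (eq_pnat _ (pcharf_eq pF)) pnat_id.
have qpos : (0 < q)%N by rewrite hq expn_gt0 prime_gt0.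
have qodd : odd q by rewrite hq oddX hodd orbT.
have D (x y : F) : (x + y) ^+ q = x ^+ q + y ^+ q.
  by move: qn; exact: GRing.exprDn_pchar.
have Ng (x : F) : (- x) ^+ q = - x ^+ q by exact: GRing.exprNn_pchar.
have Q2 (x : F) : (x ^+ q) ^+ q = x.
  rewrite -exprM; have -> : (q * q = q ^ 2)%N by rewrite expnS expn1.
  by rewrite -hF expf_card.
have two0 : (2%:R : F) != 0.
  rewrite -(dvdn_pcharf pF); apply/negP => /(prime_nt_dvdP (isT : prime 2) (negbT (gtn_eqF (prime_gt1 hp)))) H.
  by move: hodd; rewrite H.
have c0 : c ^+ q = c by apply/eqP.
have a0 : alpha != 0 by apply: contraNneq ha => ->; rewrite /in_Fq expr0n gtn_eqF.
pose r := alpha * alpha ^+ q / (c * (alpha + alpha ^+ q)) - alpha / c.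
have key g : fq q c g = alpha -> g ^+ 2 = r.
  move=> hg; set u := g ^+ q.
  have e1 : alpha = c * (g * u - g ^+ 2) by rewrite -hg /fq exprS.
  have e2 : alpha ^+ q = c * (u * g - u ^+ 2).
    have hu2 : u ^+ q = g by rewrite /u Q2.
    have hsq : (g ^+ 2) ^+ q = u ^+ 2 by rewrite -exprM mulnC exprM.
    rewrite e1 exprMn c0 D Ng hsq (exprMn _ g u) hu2 -/u; ring.
  have gu : g - u != 0.
    apply: contra ha => /eqP gu; rewrite /in_Fq e1 -/u.
    have -> : u = g by apply/eqP; rewrite eq_sym -subr_eq0 gu.
    by rewrite expr2 subrr mulr0 expr0n gtn_eqF.
  have s0 : c * (alpha + alpha ^+ q) != 0.
    rewrite e2 e1.
    have -> : c * (c * (g * u - g ^+ 2) + c * (u * g - u ^+ 2)) = - (c * c * (g - u) ^+ 2) by ring.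
    by rewrite oppr_eq0 !mulf_neq0 // expf_neq0.
  move: s0; rewrite /r e2 e1 => s0.
  by field; rewrite hc /=; move: s0; rewrite mulf_eq0 negb_or => /andP[].
have fN g : fq q c (- g) = fq q c g.
  by rewrite /fq exprNn -signr_odd /= qodd /= expr0 mul1r sqrrN.
cbv zeta.
case: (pickP [pred g | fq q c g == alpha]) => [g /= /eqP hg | none].
  have -> : [set g0 | fq q c g0 == alpha] = [set g; - g].
    apply/setP => x; rewrite !inE; apply/idP/idP.
    - move=> /eqP hx; have : (x - g) * (x + g) == 0.
        by rewrite -subr_sqr key // key // subrr.
      by rewrite mulf_eq0 subr_eq0 addr_eq0.
    - by case/orP => /eqP ->; rewrite ?fN hg.
  rewrite cards2; apply/orP; right.
  suff : g != - g by move=> ->.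
  have g0 : g != 0.
    apply: contra ha => /eqP g0; by rewrite -hg g0 /fq /in_Fq !expr0n /= subrr mulr0 expr0n gtn_eqF.
  rewrite -addr_eq0 -mulr2n -mulr_natr mulf_neq0 //.
apply/orP; left; apply/eqP; apply/eqP; rewrite cards_eq0; apply/eqP/setP => x.
by rewrite !inE; have := none x.
Qed.
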